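(* Let $H$ be a real or complex Hilbert space of dimension $n$, let $N\ge n$, let $F=\{f_i\}_{i=1}^N$ be a Parseval frame for $H$, and let $\{q_i\}_{i=1}^N$ be a weight number sequence. If the canonical dual of $F$ is the unique 1-erasure probabilistic spectrally optimal dual of $F$, then it is the unique 1-erasure probabilistic optimal dual of $F$, and therefore it is an $m$-erasure probabilistic optimal dual of $F$ for every $m$.
   Context: Inner products are linear in the first argument. A frame $F=\{f_i\}_{i=1}^N$ is Parseval if $\sum_i|\langle f,f_i\rangle|^2=\|f\|^2$ for all $f$; its canonical dual is $\{S_F^{-1}f_i\}=\{f_i\}$. Analysis operator: $\Theta_Ff=(\langle f,f_i\rangle)_i$. Synthesis operator: $\Theta_G^*(c)=\sum_ic_ig_i$. A dual of $F$ is a frame $G=\{g_i\}_{i=1}^N$ with $f=\sum_i\langle f,f_i\rangle g_i=\sum_i\langle f,g_i\rangle f_i$ for all $f$. A probability sequence satisfies $0\le p_i\le1$ and $\sum p_i=1$. Weight numbers: $q_i=\frac{\sum_jp_j}{\sum_jp_j-p_i}\cdot\frac{N-1}{n}$ (assumed well defined). For $1\le m\le N$, $\mathcal{D}_m^p$ is the set of $N\times N$ diagonal matrices $D$ for which there is $\Lambda$ with $|\Lambda|=m$, $D_{ii}=q_i$ for $i\in\Lambda$ and $0$ otherwise. Define $d_m^p(F,G)=\max\{\|\Theta_G^*D\Theta_F\|:D\in\mathcal{D}_m^p\}$ (operator norm) and $\mathcal{R}_1^p(F,G)=\max\{\rho(\Theta_G^*D\Theta_F):D\in\mathcal{D}_1^p\}$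 ($\rho$ the spectral radius). $G$ is a 1-erasure probabilistic spectrally optimal dual of $F$ if $\mathcal{R}_1^p(F,G)=\inf\{\mathcal{R}_1^p(F,G'):G'\text{ a dual of }F\}$. Optimal duals (operator norm) are defined recursively: - $G$ is a 1-erasure probabilistic optimal dual if $d_1^p(F,G)=\inf\{d_1^p(F,G'):G'\text{ a dual of }F\}$; - for $m\ge2$, $G$ is an $m$-erasure probabilistic optimal dual if it is an $(m-1)$-erasure probabilistic optimal dual and $d_m^p(F,G)=\inf\{d_m^p(F,G'):G'\text{ an }(m-1)\text{-erasure probabilistic optimal dual of }F\}$. *)

(* Defs.v *)
From HB Require Import structures.
From mathcomp Require Import all_boot all_order all_algebra.
From mathcomp Require Import complex.
From mathcomp Require Import boolp classical_sets reals.
Set Implicit Arguments. Unset Strict Implicit. Unset Printing Implicit Defensive.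
Import Order.TTheory GRing.Theory Num.Theory.
Local Open Scope ring_scope.
Local Open Scope classical_set_scope.

Section FrameDefs.
Variable R : realType.

(* Scalar field: b = false -> real Hilbert space, b = true -> complex. *)
Definition scal (b : bool) : numFieldType := if b then (R[i] : numFieldType) else (R : numFieldType).

(* embedding of the scalars into C (used for absolute values and eigenvalues) *)
Definition emb (b : bool) : scal b -> R[i] :=
  match b as b' return scal b' -> R[i] with
  | true => fun z => z
  | false => fun x => (x%:C)%C
  end.

Definition conjK (b : bool) : scal b -> scal b :=
  match b as b' return scal b' -> scal b' with
  | true => fun z => conjc z
  | false => fun x => x
  end.

Definition ofR (b : bool) : R -> scal b :=
  match b as b' return R -> scal b' with
  | true => fun x => (x%:C)%C
  | false => fun x => x
  end.

Variables (b : bool) (n N : nat).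
Local Notation K := (scal b).
Local Notation vec := 'cV[K]_n.

Definition absK (z : K) : R := Normc.normc (emb z).

(* inner product, linear in the first argument *)
Definition inner (x y : vec) : K := \sum_(k < n) x k 0 * conjK (y k 0).

Definition vnorm (x : vec) : R := Num.sqrt (\sum_(k < n) absK (x k 0) ^+ 2).

Definition is_frame (F : 'I_N -> vec) : Prop :=
  exists A B : R, 0 < A /\ 0 < B /\ forall f : vec,
    A * vnorm f ^+ 2 <= \sum_(i < N) absK (inner f (F i)) ^+ 2 /\
    \sum_(i < N) absK (inner f (F i)) ^+ 2 <= B * vnorm f ^+ 2.

Definition is_parseval (F : 'I_N -> vec) : Prop :=
  forall f : vec, \sum_(i < N) absK (inner f (F i)) ^+ 2 = vnorm f ^+ 2.

Definition is_dual (F G : 'I_N -> vec) : Prop :=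
  is_frame G /\ forall f : vec,
    f = \sum_(i < N) inner f (F i) *: G i /\ f = \sum_(i < N) inner f (G i) *: F i.

(* analysis operator Theta_F : K^n -> K^N, (Theta_F f)_i = <f, f_i> *)
Definition analysis (F : 'I_N -> vec) : 'M[K]_(N, n) :=
  \matrix_(i < N, k < n) conjK (F i k 0).
(* synthesis operator Theta_G^* : K^N -> K^n, c |-> sum_i c_i g_i *)
Definition synthesis (G : 'I_N -> vec) : 'M[K]_(n, N) :=
  \matrix_(k < n, i < N) G i k 0.

Definition frame_op (F : 'I_N -> vec) : 'M[K]_n := synthesis F *m analysis F.
Definition canonical_dual (F : 'I_N -> vec) : 'I_N -> vec :=
  fun i => invmx (frame_op F) *m F i.

Definition opnorm (T : 'M[K]_n) : R := sup [set vnorm (T *m x) | x in [set x : vec | vnorm x <= 1]].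
Definition spec_radius (T : 'M[K]_n) : R :=
  sup [set Normc.normc l | l in [set l : R[i] | root (char_poly (map_mx (@emb b) T)) l]].

Definition is_prob_seq (p : 'I_N -> R) : Prop :=
  (forall i, 0 <= p i <= 1) /\ \sum_(i < N) p i = 1.
Definition weight (p : 'I_N -> R) (i : 'I_N) : R :=
  (\sum_(j < N) p j) / (\sum_(j < N) p j - p i) * (N.-1%:R / n%:R).

Definition Dset (p : 'I_N -> R) (m : nat) : set 'M[K]_N :=
  [set D | exists L : {set 'I_N}, #|L| = m /\
     D = diag_mx (\row_(i < N) (if i \in L then ofR b (weight p i) else 0))].

Definition d_m (p : 'I_N -> R) (m : nat) (F G : 'I_N -> vec) : R :=
  sup [set opnorm (synthesis G *m D *m analysis F) | D in Dset p m].
Definition R_1 (p : 'I_N -> R) (F G : 'I_N -> vec) : R :=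
  sup [set spec_radius (synthesis G *m D *m analysis F) | D in Dset p 1].

Definition spec_opt_dual (p : 'I_N -> R) (F G : 'I_N -> vec) : Prop :=
  is_dual F G /\ R_1 p F G = inf [set R_1 p F G' | G' in [set G' | is_dual F G']].

(* opt_dual p F k G : G is a k-erasure probabilistic optimal dual (k >= 1);
   opt_dual p F 0 G means G is a dual of F. *)
Fixpoint opt_dual (p : 'I_N -> R) (F : 'I_N -> vec) (k : nat) (G : 'I_N -> vec) : Prop :=
  match k with
  | 0 => is_dual F G
  | k'.+1 => opt_dual p F k' G /\
      d_m p k'.+1 F G = inf [set d_m p k'.+1 F G' | G' in [set G' | opt_dual p F k' G']]
  end.

End FrameDefs.

(* Main.v *)
Require Import Defs.
From HB Require Import structures.
From mathcomp Require Import all_boot all_order all_algebra.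
From mathcomp Require Import complex.
From mathcomp Require Import boolp classical_sets reals.
Import Order.TTheory GRing.Theory Num.Theory.
Local Open Scope ring_scope.
Set Implicit Arguments. Unset Strict Implicit. Unset Printing Implicit Defensive.
Local Open Scope classical_set_scope.

Section Emb.
Variables (R : realType) (b : bool).
Local Notation K := (scal R b).

Lemma emb_zmod : zmod_morphism (@emb R b).
Proof. by case: b => x y //=; rewrite rmorphB. Qed.
HB.instance Definition _ := GRing.isZmodMorphism.Build K R[i] (@emb R b) emb_zmod.
Lemma emb_mul : monoid_morphism (@emb R b).
Proof. by case: b; split => [|x y] /=; rewrite ?rmorph1 ?rmorphM. Qed.
HB.instance Definition _ := GRing.isMonoidMorphism.Build K R[i] (@emb R b) emb_mul.

Lemma conjK_zmod : zmod_morphism (@conjK R b).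
Proof. by case: b => x y //=; rewrite rmorphB. Qed.
HB.instance Definition _ := GRing.isZmodMorphism.Build K K (@conjK R b) conjK_zmod.
Lemma conjK_mul : monoid_morphism (@conjK R b).
Proof. case: b; split => [|x y] //=; [exact: conjc1 | exact: (rmorphM conjc)]. Qed.
HB.instance Definition _ := GRing.isMonoidMorphism.Build K K (@conjK R b) conjK_mul.

Lemma embJ (x : K) : emb (conjK x) = conjc (emb x).
Proof. by case: b x => x /=; rewrite ?oppr0. Qed.
Lemma conjKK (x : K) : conjK (conjK x) = x.
Proof. by case: b x => x //=; rewrite conjcK. Qed.
Lemma emb_inj : injective (@emb R b).
Proof. by case: b => x y //= /complexI. Qed.
Lemma emb_ofR r : emb (@ofR R b r) = (r%:C)%C.
Proof. by case: b. Qed.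
Lemma normC_emb (x : K) : `|emb x| = ((absK x)%:C)%C.
Proof. by []. Qed.
Lemma absK_ge0 (x : K) : 0 <= absK x.
Proof. by rewrite -lecR -normC_emb normr_ge0. Qed.
Lemma absKM (x y : K) : absK (x * y) = absK x * absK y.
Proof. by apply: complexI; rewrite rmorphM /= -!normC_emb rmorphM normrM. Qed.
Lemma absKJ (x : K) : absK (conjK x) = absK x.
Proof. by apply: complexI; rewrite -!normC_emb embJ normcJ. Qed.
Lemma absKD (x y : K) : absK (x + y) <= absK x + absK y.
Proof. by rewrite -lecR rmorphD -!normC_emb rmorphD ler_normD. Qed.
Lemma absK_ofR r : absK (@ofR R b r) = `|r|.
Proof.
apply: complexI; rewrite -normC_emb emb_ofR.
by rewrite normc_def /= expr0n /= addr0 sqrtr_sqr.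
Qed.
Lemma absK_eq0 (x : K) : absK x = 0 -> x = 0.
Proof. by move=> h; apply: emb_inj; rewrite rmorph0; apply: Normc.eq0_normc. Qed.
Lemma absK0 : absK (0 : K) = 0.
Proof. by rewrite /absK rmorph0 Normc.normc0. Qed.

Lemma ofR_zmod : zmod_morphism (@ofR R b).
Proof. by case: b => x y //=; rewrite rmorphB. Qed.
HB.instance Definition _ := GRing.isZmodMorphism.Build R K (@ofR R b) ofR_zmod.
Lemma ofR_mul : monoid_morphism (@ofR R b).
Proof.
case: b; last by split.
by split => [|x y] /=; [exact: rmorph1 | exact: rmorphM].
Qed.
HB.instance Definition _ := GRing.isMonoidMorphism.Build R K (@ofR R b) ofR_mul.

Lemma mulKJ (x : K) : x * conjK x = @ofR R b (absK x ^+ 2).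
Proof.
apply: emb_inj; rewrite rmorphM /= embJ emb_ofR rmorphXn /= -normC_emb.
by rewrite sqr_normc.
Qed.

Lemma absK_sum (I : finType) (F : I -> K) : absK (\sum_i F i) <= \sum_i absK (F i).
Proof.
apply: (big_ind2 (fun x y => absK x <= y)); first by rewrite absK0.
  by move=> x1 x2 y1 y2 h1 h2; apply: le_trans (absKD _ _) (lerD h1 h2).
by [].
Qed.
Lemma conjK_ofR r : conjK (@ofR R b r) = @ofR R b r.
Proof. by apply: emb_inj; rewrite embJ emb_ofR conjc_real. Qed.
Lemma ofR_inj : injective (@ofR R b).
Proof. by move=> x y /(congr1 (@emb R b)); rewrite !emb_ofR => /complexI. Qed.
End Emb.
From mathcomp Require Import ring lra.
Section RealCS.
Variable R : realType.
Lemma realCS (I : finType) (a c : I -> R) :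
  (\sum_i a i * c i) ^+ 2 <= (\sum_i a i ^+ 2) * (\sum_i c i ^+ 2).
Proof.
set A := \sum_i a i ^+ 2; set B := \sum_i c i ^+ 2; set C := \sum_i a i * c i.
have A0 : 0 <= A by apply: sumr_ge0 => i _; apply: sqr_ge0.
have h : 0 <= \sum_i (A * c i - C * a i) ^+ 2 by apply: sumr_ge0 => i _; apply: sqr_ge0.
have e : \sum_i (A * c i - C * a i) ^+ 2 = A ^+ 2 * B - (A * C) * C *+ 2 + C ^+ 2 * A.
  rewrite (eq_bigr (fun i => A ^+ 2 * c i ^+ 2 - (A * C) * (a i * c i) *+ 2 + C ^+ 2 * a i ^+ 2)); last first.
    by move=> i _; ring.
  by rewrite big_split /= sumrB -!mulr_sumr sumrMnl -mulr_sumr.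
rewrite e in h.
have [A_eq0|A_gt0] := eqVneq A 0.
  have a0 : forall i, a i = 0.
    move=> i; apply/eqP; rewrite -sqrf_eq0; apply/eqP.
    by move: A_eq0 => /psumr_eq0P; apply => // j _; apply: sqr_ge0.
  rewrite /C (eq_bigr (fun _ => 0)) ?big1 // ?A_eq0; last by move=> i _; rewrite a0 mul0r.
  by rewrite expr0n /= mul0r.
have Ap : 0 < A by rewrite lt_def A_gt0 A0.
nra.
Qed.
End RealCS.
Section Vec.
Variables (R : realType) (b : bool) (n : nat).
Local Notation K := (scal R b).
Local Notation ofK := (@ofR R b).
Local Notation vec := 'cV[K]_n.

Lemma vnorm_ge0 (x : vec) : 0 <= vnorm x.
Proof. exact: sqrtr_ge0. Qed.
Lemma vnorm2 (x : vec) : vnorm x ^+ 2 = \sum_k absK (x k 0) ^+ 2.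
Proof. by rewrite sqr_sqrtr // sumr_ge0 // => i _; apply: sqr_ge0. Qed.
Lemma inner_self (x : vec) : inner x x = ofK (vnorm x ^+ 2).
Proof. by rewrite vnorm2 rmorph_sum; apply: eq_bigr => i _; rewrite mulKJ. Qed.
Lemma innerC (x y : vec) : inner x y = conjK (inner y x).
Proof.
rewrite /inner rmorph_sum; apply: eq_bigr => i _.
by rewrite rmorphM /= conjKK mulrC.
Qed.
Lemma innerZl a (x y : vec) : inner (a *: x) y = a * inner x y.
Proof. by rewrite /inner mulr_sumr; apply: eq_bigr => i _; rewrite mxE mulrA. Qed.
Lemma inner0l (y : vec) : inner 0 y = 0.
Proof. by rewrite /inner big1 // => i _; rewrite mxE mul0r. Qed.
Lemma vnormZ a (x : vec) : vnorm (a *: x) = absK a * vnorm x.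
Proof.
rewrite /vnorm (eq_bigr (fun k => absK a ^+ 2 * absK (x k 0) ^+ 2)); last first.
  by move=> k _; rewrite mxE absKM exprMn.
rewrite -mulr_sumr sqrtrM ?sqr_ge0 // sqrtr_sqr ger0_norm //; exact: absK_ge0.
Qed.
Lemma vnorm0 : vnorm (0 : vec) = 0.
Proof. by rewrite /vnorm big1 ?sqrtr0 // => k _; rewrite mxE absK0 expr0n. Qed.

Lemma CS (x y : vec) : absK (inner x y) <= vnorm x * vnorm y.
Proof.
rewrite /inner; apply: le_trans; first exact: (@absK_sum R b).
rewrite (eq_bigr (fun k => absK (x k 0) * absK (y k 0))); last first.
  by move=> k _; rewrite absKM absKJ.
set C := \sum_k _.
have C0 : 0 <= C by apply: sumr_ge0 => k _; apply: mulr_ge0; apply: absK_ge0.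
rewrite -(ger0_norm C0) -sqrtr_sqr /vnorm -sqrtrM; last first.
  by apply: sumr_ge0 => k _; apply: sqr_ge0.
by rewrite ler_sqrt ?realCS // mulr_ge0 // sumr_ge0 // => k _; apply: sqr_ge0.
Qed.
End Vec.
Section Sup.
Variable R : realType.
Lemma sup_max (S : set R) x : S x -> ubound S x -> sup S = x.
Proof.
move=> Sx ubx; apply/le_anti; rewrite ge_sup //=; last by exists x.
by apply: ub_le_sup => //; exists x.
Qed.
Lemma sup_le_of (S : set R) a : 0 <= a -> (forall y, S y -> y <= a) -> sup S <= a.
Proof.
move=> a0 h; have [[y Sy]|S0] := pselect (exists y, S y).
  by rewrite ge_sup //; exists y.
have -> : S = set0 by apply/seteqP; split => y // Sy; exfalso; apply: S0; exists y.
by rewrite sup0.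
Qed.
Lemma sup_ge_of (S : set R) a y : S y -> y = a -> (forall y, S y -> y <= a) -> a <= sup S.
Proof. by move=> Sy <- h; apply: ub_le_sup => //; exists y. Qed.
Lemma sup_ge0 (S : set R) a : (forall y, S y -> 0 <= y <= a) -> 0 <= sup S.
Proof.
move=> h; have [[y Sy]|S0] := pselect (exists y, S y).
  have /andP[y0 _] := h y Sy; apply: le_trans y0 _; apply: ub_le_sup => //.
  by exists a => z /h /andP[].
have -> : S = set0 by apply/seteqP; split => z // Sz; exfalso; apply: S0; exists z.
by rewrite sup0.
Qed.
Lemma inf_min (S : set R) x : S x -> lbound S x -> inf S = x.
Proof.
move=> Sx lbx; apply/le_anti; rewrite lb_le_inf ?andbT //=; last by exists x.
by apply: ge_inf => //; exists x.
Qed.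
End Sup.
Section RankOne.
Variables (R : realType) (b : bool) (n : nat).
Local Notation K := (scal R b).
Local Notation ofK := (@ofR R b).
Local Notation vec := 'cV[K]_n.

Definition r1 (c : K) (g f : vec) : 'M[K]_n := c *: (g *m (map_mx (@conjK R b) f)^T).

Lemma row_inner (x f : vec) : (map_mx (@conjK R b) f)^T *m x = (inner x f)%:M.
Proof.
apply/matrixP => i j; rewrite !ord1 !mxE /inner; apply: eq_bigr => k _.
by rewrite !mxE mulrC.
Qed.

Lemma r1_mul c (g f x : vec) : r1 c g f *m x = (c * inner x f) *: g.
Proof.
by rewrite /r1 -scalemxAl -mulmxA row_inner mul_mx_scalar scalerA.
Qed.

Lemma opnorm_r1 c (g f : vec) : opnorm (r1 c g f) = absK c * vnorm f * vnorm g.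
Proof.
have ub : ubound [set vnorm (r1 c g f *m x) | x in [set x : vec | vnorm x <= 1]]
    (absK c * vnorm f * vnorm g).
  move=> _ [x /= x1 <-]; rewrite r1_mul vnormZ absKM.
  rewrite -!mulrA ler_wpM2l ?absK_ge0 // ler_wpM2r ?vnorm_ge0 //.
  apply: le_trans; first exact: CS.
  exact: ler_piMl (vnorm_ge0 _) x1.
rewrite /opnorm; apply: sup_max => //.
have [f0|fn0] := eqVneq (vnorm f) 0.
  exists 0; first by rewrite /= vnorm0.
  by rewrite mulmx0 vnorm0 f0 mulr0 mul0r.
exists ((ofK (vnorm f)^-1) *: f).
  rewrite /= vnormZ absK_ofR ger0_norm ?invr_ge0 ?vnorm_ge0 // mulVf //.
rewrite (r1_mul c g f) vnormZ absKM innerZl inner_self -rmorphM absK_ofR.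
rewrite ger0_norm; last by rewrite mulr_ge0 ?invr_ge0 ?exprn_ge0 ?vnorm_ge0.
by congr (_ * _ * _); rewrite expr2 mulrA mulVf // mul1r.
Qed.
Local Notation em := (map_mx (@emb R b)).
Local Notation cw f := (map_mx conjc (map_mx (@emb R b) f))^T.

Lemma map_r1 c (g f : vec) : em (r1 c g f) = emb c *: (em g *m cw f).
Proof.
rewrite /r1 map_mxZ map_mxM -map_trmx; congr (_ *: (_ *m _^T)).
by apply/matrixP => i j; rewrite !mxE; apply: embJ.
Qed.

Lemma cw_mul (x f : vec) : cw f *m em x = (emb (inner x f))%:M.
Proof.
apply/matrixP => i j; rewrite !ord1 !mxE /inner rmorph_sum; apply: eq_bigr => k _.
by rewrite !mxE rmorphM /= embJ mulrC.
Qed.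

Lemma root_r1 c (g f : vec) l : root (char_poly (em (r1 c g f))) l ->
  l = 0 \/ l = emb (c * inner g f).
Proof.
rewrite -eigenvalue_root_char => /eigenvalueP [v hv vn0].
rewrite map_r1 -scalemxAr mulmxA [v *m em g]mx11_scalar mul_scalar_mx scalerA in hv.
set s := (v *m em g) 0 0 in hv.
have [->|l0] := eqVneq l 0; [by left | right].
have v_eq : v = (emb c * s / l) *: cw f.
  by rewrite -[v](scalerK l0) -hv scalerA mulrC.
have s0 : s != 0.
  by apply: contra vn0 => /eqP s0; rewrite v_eq s0 mulr0 mul0r scale0r.
have h : s = emb c * s / l * emb (inner g f).
  by rewrite {1}/s {1}v_eq -scalemxAl cw_mul mxE /= mxE eqxx mulr1n.
rewrite rmorphM /=; apply: (mulfI s0); rewrite {1}h; field; exact: l0.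
Qed.

Lemma root_r1_self c (f : vec) : emb (c * inner f f) != 0 ->
  root (char_poly (em (r1 c f f))) (emb (c * inner f f)).
Proof.
move=> h; rewrite -eigenvalue_root_char; apply/eigenvalueP; exists (cw f).
  by rewrite map_r1 -scalemxAr mulmxA cw_mul mul_scalar_mx scalerA rmorphM.
apply: contra h => /eqP w0.
have e : emb (inner f f) = (cw f *m em f) 0 0 by rewrite cw_mul mxE eqxx mulr1n.
by rewrite rmorphM /= e w0 mul0mx mxE mulr0.
Qed.

Lemma spec_r1_le c (g f : vec) : spec_radius (r1 c g f) <= absK (c * inner g f).
Proof.
rewrite /spec_radius; apply: sup_le_of; first exact: absK_ge0.
move=> _ [l /= /root_r1 [->|->] <-]; last by [].
by rewrite Normc.normc0 absK_ge0.
Qed.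

Lemma spec_r1_ge c (f : vec) : absK (c * inner f f) <= spec_radius (r1 c f f).
Proof.
have bnd : forall y, [set Normc.normc l | l in [set l : R[i] | root (char_poly (em (r1 c f f))) l]] y ->
    0 <= y <= absK (c * inner f f).
  move=> _ [l /= /root_r1 [->|->] <-].
    by rewrite Normc.normc0 lexx absK_ge0.
  by rewrite lexx absK_ge0.
have [a0|a0] := eqVneq (absK (c * inner f f)) 0.
  by rewrite a0; apply: sup_ge0 bnd.
rewrite /spec_radius; apply: (@sup_ge_of _ _ _ (absK (c * inner f f))).
- exists (emb (c * inner f f)) => //=; apply: root_r1_self.
  by apply: contra a0 => /eqP e; rewrite /absK e Normc.normc0.
- by [].
- by move=> y /bnd /andP[].
Qed.
End RankOne.
Section Erasure.
Variables (R : realType) (b : bool) (n N : nat).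
Local Notation K := (scal R b).
Local Notation ofK := (@ofR R b).
Local Notation vec := 'cV[K]_n.
Variables (p : 'I_N -> R) (F : 'I_N -> vec).

Definition cq (i : 'I_N) : K := ofK (weight n p i).
Definition Di (i : 'I_N) : 'M[K]_N :=
  diag_mx (\row_(j < N) (if j \in [set i]%SET then ofK (weight n p j) else 0)).

Lemma Dset1P D : Dset n p 1 D <-> exists i, D = Di i.
Proof.
split.
  move=> [L [/eqP/cards1P [i ->] ->]]; exists i; reflexivity.
by move=> [i ->]; exists [set i]%SET; rewrite cards1.
Qed.

Lemma prod_Di (G : 'I_N -> vec) i :
  synthesis G *m Di i *m analysis F = r1 (cq i) (G i) (F i).
Proof.
apply/matrixP => k l; rewrite /Di mul_mx_diag !mxE (bigD1 i) //= big1; last first.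
  by move=> j ji; rewrite !mxE inE (negPf ji) mulr0 mul0r.
rewrite !mxE inE eqxx addr0 big_ord1 !mxE /cq.
have e : (ord0 : 'I_1) = 0 by apply: val_inj.
by rewrite e; ring.
Qed.

Lemma memS (Phi : 'M[K]_n -> R) (G : 'I_N -> vec) y :
  [set Phi (synthesis G *m D *m analysis F) | D in Dset n p 1] y <->
  exists i, y = Phi (r1 (cq i) (G i) (F i)).
Proof.
split.
  by move=> [D /Dset1P [i ->] <-]; exists i; rewrite prod_Di.
move=> [i ->]; exists (Di i); first by apply/Dset1P; exists i.
by rewrite prod_Di.
Qed.
Lemma spec_r1_ge0 c (g f : vec) : 0 <= spec_radius (r1 c g f).
Proof.
rewrite /spec_radius; apply: (@sup_ge0 _ _ (absK (c * inner g f))).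
move=> _ [l /= /root_r1 [->|->] <-].
  by rewrite Normc.normc0 lexx absK_ge0.
by rewrite lexx absK_ge0.
Qed.

Lemma finite_ub (S : set R) (h : 'I_N -> R) :
  (forall y, S y -> exists i, y = h i) -> has_ubound S.
Proof.
move=> H; exists (\big[Order.max/0]_i h i) => y /H [i ->].
exact: le_bigmax.
Qed.

Lemma opnorm_ge c (g f : vec) : absK (c * inner g f) <= opnorm (r1 c g f).
Proof.
rewrite opnorm_r1 absKM -mulrA ler_wpM2l ?absK_ge0 // mulrC; exact: CS.
Qed.

Lemma d1_ge_R1 (G : 'I_N -> vec) : (0 < N)%N -> R_1 p F G <= d_m p 1 F G.
Proof.
move=> N0; rewrite /R_1 /d_m; apply: ge_sup.
  by exists (spec_radius (r1 (cq (Ordinal N0)) (G (Ordinal N0)) (F (Ordinal N0)))); apply/memS; exists (Ordinal N0).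
move=> y /memS [i ->].
apply: le_trans; first exact: spec_r1_le.
apply: le_trans; first exact: opnorm_ge.
apply: ub_le_sup; last by apply/memS; exists i.
by apply: (@finite_ub _ (fun i => opnorm (r1 (cq i) (G i) (F i)))) => z /memS.
Qed.

Lemma d1_le_R1_self : (0 < N)%N -> d_m p 1 F F <= R_1 p F F.
Proof.
move=> N0; rewrite /R_1 /d_m; apply: ge_sup.
  by exists (opnorm (r1 (cq (Ordinal N0)) (F (Ordinal N0)) (F (Ordinal N0)))); apply/memS; exists (Ordinal N0).
move=> y /memS [i ->].
have -> : opnorm (r1 (cq i) (F i) (F i)) = absK (cq i * inner (F i) (F i)).
  rewrite opnorm_r1 absKM inner_self absK_ofR ger0_norm ?exprn_ge0 ?vnorm_ge0 //.
  by rewrite expr2 mulrA.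
apply: le_trans; first exact: spec_r1_ge.
apply: ub_le_sup; last by apply/memS; exists i.
by apply: (@finite_ub _ (fun i => spec_radius (r1 (cq i) (F i) (F i)))) => z /memS.
Qed.

Lemma R1_ge0 (G : 'I_N -> vec) : 0 <= R_1 p F G.
Proof.
rewrite /R_1; apply: (@sup_ge0 _ _ (\big[Order.max/0]_i spec_radius (r1 (cq i) (G i) (F i)))).
move=> y /memS [i ->]; rewrite spec_r1_ge0 /=.
exact: (le_bigmax _ (fun i => spec_radius (r1 (cq i) (G i) (F i)))).
Qed.
End Erasure.
Section Parseval.
Variables (R : realType) (b : bool) (n N : nat).
Local Notation K := (scal R b).
Local Notation ofK := (@ofR R b).
Local Notation vec := 'cV[K]_n.
Local Notation cT f := (map_mx (@conjK R b) f)^T.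

Lemma quad_delta (A : 'M[K]_n) k l :
  (cT (delta_mx k 0 : vec) *m A *m (delta_mx l 0 : vec)) 0 0 = A k l.
Proof. by rewrite map_delta_mx (@trmx_delta K n 1 k 0) -rowE -colE !mxE. Qed.

Lemma quad_expand (A : 'M[K]_n) k l (t : K) :
  (cT (delta_mx k 0 + t *: delta_mx l 0 : vec) *m A *m (delta_mx k 0 + t *: delta_mx l 0 : vec)) 0 0
  = A k k + t * A k l + conjK t * A l k + conjK t * t * A l l.
Proof.
have e : cT (delta_mx k 0 + t *: delta_mx l 0 : vec) = delta_mx 0 k + conjK t *: delta_mx 0 l.
  apply/matrixP => i j; rewrite !mxE rmorphD rmorphM /= !rmorph_nat.
  by rewrite !ord1 !eqxx /= !andbT; reflexivity.
rewrite e.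
rewrite !mulmxDl !mulmxDr -!scalemxAl -!scalemxAr -!rowE -!colE !mxE.
ring.
Qed.

Lemma herm0 (A : 'M[K]_n) : (forall k l, conjK (A l k) = A k l) ->
  (forall f : vec, (cT f *m A *m f) 0 0 = 0) -> A = 0.
Proof.
move=> hA hQ; apply/matrixP => k l; rewrite mxE.
have dk : forall j, A j j = 0 by move=> j; rewrite -quad_delta hQ.
have := hQ (delta_mx k 0 + conjK (A k l) *: delta_mx l 0).
rewrite quad_expand !dk mulr0 addr0 add0r conjKK -[A l k]hA.
rewrite [_ * A k l]mulrC mulKJ -rmorphD /= => h.
have h2 : ofK (absK (A k l) ^+ 2 + absK (A k l) ^+ 2) = ofK 0.
  by rewrite h (rmorph0 (@ofR R b)).
move: (@ofR_inj R b _ _ h2) => /eqP.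
rewrite paddr_eq0 ?exprn_ge0 ?absK_ge0 // sqrf_eq0 => /andP[/eqP /absK_eq0 -> _].
done.
Qed.
Variable F : 'I_N -> vec.

Lemma ana_mul (f : vec) i : (analysis F *m f) i 0 = inner f (F i).
Proof. by rewrite !mxE /inner; apply: eq_bigr => k _; rewrite !mxE mulrC. Qed.

Lemma syn_mul (f : vec) i : (cT f *m synthesis F) 0 i = conjK (inner f (F i)).
Proof.
rewrite !mxE /inner rmorph_sum; apply: eq_bigr => k _.
by rewrite !mxE rmorphM /= conjKK.
Qed.

Lemma frame_op_herm k l : conjK (frame_op F l k) = frame_op F k l.
Proof.
rewrite !mxE rmorph_sum; apply: eq_bigr => i _.
by rewrite !mxE rmorphM /= conjKK mulrC.
Qed.

Lemma parseval_frame_op : is_parseval F -> frame_op F = 1%:M.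
Proof.
move=> hP; apply/eqP; rewrite -subr_eq0; apply/eqP; apply: herm0.
  move=> k l; have := frame_op_herm k l; rewrite !mxE rmorphB /= => ->.
  by rewrite rmorph_nat eq_sym.
move=> f.
have e1 : (cT f *m frame_op F *m f) 0 0 = ofK (vnorm f ^+ 2).
  rewrite -hP rmorph_sum /frame_op mulmxA -mulmxA mxE.
  apply: eq_bigr => i _; rewrite ana_mul syn_mul mulrC mulKJ //.
have e2 : (cT f *m 1%:M *m f) 0 0 = ofK (vnorm f ^+ 2).
  by rewrite mulmx1 row_inner mxE eqxx mulr1n inner_self.
by rewrite mulmxBr mulmxBl mxE e1 mxE e2 subrr.
Qed.

Lemma canonical_dual_parseval : is_parseval F -> canonical_dual F = F.
Proof.
move=> hP; apply: funext => i; rewrite /canonical_dual parseval_frame_op //.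
by rewrite invmx1 mul1mx.
Qed.
End Parseval.
Theorem corollary4p4 (R : realType) (b : bool) (n N : nat)
  (F : 'I_N -> 'cV[scal R b]_n) (p : 'I_N -> R) :
  (0 < n)%N -> (n <= N)%N ->
  is_parseval F -> is_frame F ->
  is_prob_seq p -> (forall i : 'I_N, \sum_(j < N) p j - p i != 0) ->
  (spec_opt_dual p F (canonical_dual F) /\
   forall G, spec_opt_dual p F G -> forall i, G i = canonical_dual F i) ->
  (opt_dual p F 1 (canonical_dual F) /\
   (forall G, opt_dual p F 1 G -> forall i, G i = canonical_dual F i)) /\
  (forall m : nat, (1 <= m <= N)%N -> opt_dual p F m (canonical_dual F)).
Proof.
move=> n0 nN hP _ _ _ [[dualF hspec] huniq].
have N0 : (0 < N)%N := leq_trans n0 nN.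
have Fc := canonical_dual_parseval hP.
rewrite Fc in dualF hspec huniq *.
have lbR : forall G', is_dual F G' -> R_1 p F F <= R_1 p F G'.
  move=> G' hG'; rewrite hspec; apply: ge_inf.
    by exists 0 => _ [G'' _ <-]; apply: R1_ge0.
  by exists G'.
have infd : inf [set d_m p 1 F G' | G' in [set G' | opt_dual p F 0 G']] = d_m p 1 F F.
  apply: inf_min; first by exists F.
  move=> _ [G' /= hG' <-].
  apply: le_trans; first exact: d1_le_R1_self.
  apply: le_trans; first exact: (lbR G' hG').
  exact: d1_ge_R1.
have opt1 : opt_dual p F 1 F by split; [exact: dualF | rewrite infd].
have uniq1 : forall G, opt_dual p F 1 G -> G = F.
  move=> G [hG hd]; rewrite infd in hd.
  apply: funext => i; apply: (huniq G); split; first exact: hG.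
  apply/le_anti; apply/andP; split.
    rewrite -hspec; apply: le_trans; first exact: d1_ge_R1.
    by rewrite hd; apply: d1_le_R1_self.
  by apply: ge_inf; [exists 0 => _ [G'' _ <-]; apply: R1_ge0 | exists G].
have ind : forall k, (1 <= k)%N -> opt_dual p F k F /\ forall G, opt_dual p F k G -> G = F.
  elim => [|k IH] k1; first by move: k1.
  have [->|kpos] := eqVneq k 0%N; first by split; [exact: opt1 | exact: uniq1].
  have k0 : (0 < k)%N by rewrite lt0n.
  have [optk uniqk] := IH k0.
  split; last by move=> G [/uniqk].
  split; first exact: optk.
  have -> : [set d_m p k.+1 F G' | G' in [set G' | opt_dual p F k G']] = [set d_m p k.+1 F F].
    apply/seteqP; split => y.
      by move=> [G' /= /uniqk -> <-].
    by move=> /= ->; exists F.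
  by rewrite inf1.
split; first by split; [exact: opt1 | move=> G /uniq1 ->].
by move=> m /andP[m1 _]; case: (ind m m1).
Qed.
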